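(* Let $\mathcal{T}_0$ be the caterpillar tree with $n\ge 3$ leaves labelled $1,\dots,n$ in order along its spine, and let $P_{\mathcal{T}_0}$ be as in the context. The minimal generators of $P_{\mathcal{T}_0}$ are exactly the elements $w_{i,j,k}$, $1\le i<j<k\le n$, where $w_{i,j,k}$ is the minimal generator of $P_{\mathcal{T}_0}$ whose support is the subtree spanned by the leaves $i,j,k$. Moreover, the kernel $I_{\mathcal{T}_0}$ of the surjection $\mathbb{C}[w_{i,j,k}: i<j<k]\to\mathbb{C}[P_{\mathcal{T}_0}]$ equals the ideal $J_{3,n}$ generated by all binomials $w_{i,j,k}w_{r,s,t}-w_{(i,j,k)\wedge(r,s,t)}\,w_{(i,j,k)\vee(r,s,t)}$, where $(i,j,k)\wedge(r,s,t)=(\min(i,r),\min(j,s),\min(k,t))$ and $(i,j,k)\vee(r,s,t)=(\max(i,r),\max(j,s),\max(k,t))$.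
   Context: A Berenstein–Zelevinsky (BZ) triangle for $sl_3(\mathbb{C})$ is a $9$-tuple of nonnegative integers $(a,b,c,d,e,f,g,h,i)$ placed on the vertices of a triangular diagram with rows $a$; $b\ c$; $d\ e$; $f\ g\ h\ i$; the sides, oriented counterclockwise, read side 1 $=(a,b,d,f)$, side 2 $=(f,g,h,i)$, side 3 $=(i,e,c,a)$; the entries satisfy $b+c=g+h$, $c+e=d+g$, $e+h=b+d$. The boundary weight of a side $(x_1,x_2,x_3,x_4)$ is $(x_1+x_2)\omega_1+(x_3+x_4)\omega_2$ ($\omega_1,\omega_2$ the fundamental weights of $sl_3(\mathbb{C})$), identified with $(x_1+x_2,x_3+x_4)$. For a tree $\mathcal{T}$ whose non-leaf vertices have degree $3$ and leaves labelled $1,\dots,n$, attach a BZ triangle to each non-leaf vertex with a fixed bijection between its sides (counterclockwise) and the incident edges. $Q_{\mathcal{T}}(sl_3(\mathbb{C}))$ is the semigroup (entrywise addition) of such assignments such that for each edge joining non-leaf vertices $v,v'$, if $v$'s side on it has boundary weight $(p,q)$ then $v'$'s side on it has $(q,p)$; $\pi_{\mathcal{T}}(w)$ records at each leaf the boundary weight on its leaf edge; the support of $w$ is the set of edges with nonzero boundary weight. $P_{\mathcal{T}}$ is the subsemigroup of $w$ with every component of $\pi_{\mathcal{T}}(w)$ a nonnegative multiple of $\omega_1$. The caterpillar tree $\mathcal{T}_0$ has non-leaf vertices $v_1,\dots,v_{n-2}$ forming a path (the spine), with leaves $1,2$ attached to $v_1$, leaf $i$ attached to $v_{i-1}$ for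 $3\le i\le n-2$, and leaves $n-1,n$ attached to $v_{n-2}$. *)

(* Defs.v *)
From HB Require Import structures.
From mathcomp Require Import all_boot all_order all_algebra all_field.
From mathcomp Require Import mpoly.
Set Implicit Arguments. Unset Strict Implicit. Unset Printing Implicit Defensive.
Import GRing.Theory.

(* Conventions (0-indexed internally): the leaf labelled l+1 in the paper is *)
(* leaf l here (l < n); the spine vertex v_(m+1) of the paper is vertex m    *)
(* here (m < n-2); the spine edge joining v_(m+1) and v_(m+2) is inner edge  *)
(* m here (m < n-3).                                                         *)

(* An assignment of a 9-tuple of naturals (a,b,c,d,e,f,g,h,i) to every      *)
(* non-leaf vertex of the caterpillar T0; entry 0..8 = a..i.                 *)
Definition assign (n : nat) := {ffun 'I_(n - 2) * 'I_9 -> nat}.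

Definition asg0 n : assign n := [ffun _ => 0%N].
Definition asg_add n (u v : assign n) : assign n := [ffun x => (u x + v x)%N].

(* entry k (0..8) of the triangle at vertex m; 0 out of range *)
Definition ent n (w : assign n) (m k : nat) : nat :=
  if insub m is Some m' then w (m', inord k) else 0%N.

Definition BZ_at n (w : assign n) (m : nat) : Prop :=
  let a := ent w m 0 in let b := ent w m 1 in let c := ent w m 2 in
  let d := ent w m 3 in let e := ent w m 4 in let f := ent w m 5 in
  let g := ent w m 6 in let h := ent w m 7 in let i := ent w m 8 in
  [/\ (b + c = g + h)%N, (c + e = d + g)%N & (e + h = b + d)%N].

Definition side_wt n (w : assign n) (m s : nat) : nat * nat :=
  let a := ent w m 0 in let b := ent w m 1 in let c := ent w m 2 in
  let d := ent w m 3 in let e := ent w m 4 in let f := ent w m 5 in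
  let g := ent w m 6 in let h := ent w m 7 in let i := ent w m 8 in
  if s == 1%N then (a + b, d + f)%N
  else if s == 2%N then (f + g, h + i)%N
  else (i + e, c + a)%N.

(* Leaf l is attached to vertex
   leaf_vert n l; its edge is side leaf_side n l of that vertex
   (counterclockwise order of sides at each vertex: at v_1 = (leaf 1, leaf 2,
   spine edge to v_2); at an inner v_m = (spine edge to v_(m-1), leaf m+1,
   spine edge to v_(m+1)); at v_(n-2) = (spine edge to v_(n-3), leaf n-1,
   leaf n); for n = 3 the unique vertex has sides (leaf 1, leaf 2, leaf 3)).
   Inner edge m joins side 3 of vertex m to side 1 of vertex m+1. *)
Definition leaf_vert (n l : nat) : nat :=
  if (l <= 1)%N then 0%N else if (n - 2 <= l)%N then (n - 3)%N else l.-1.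
Definition leaf_side (n l : nat) : nat :=
  if l == 0%N then 1%N else if l == n.-1 then 3%N else 2%N.

(* boundary weight on the leaf edge of leaf l (this is pi_T0(w) at l) *)
Definition leaf_wt n (w : assign n) (l : nat) : nat * nat :=
  side_wt w (leaf_vert n l) (leaf_side n l).
Definition inner_wt n (w : assign n) (m : nat) : nat * nat := side_wt w m 3.

Definition swap (p : nat * nat) : nat * nat := (p.2, p.1).

Definition inQ n (w : assign n) : Prop :=
  (forall m, (m < n - 2)%N -> BZ_at w m) /\
  (forall m, (m < n - 3)%N -> side_wt w m 3 = swap (side_wt w m.+1 1)).

(* P_T0: every leaf weight is a nonnegative multiple of omega_1 *)
Definition inP n (w : assign n) : Prop :=
  inQ w /\ forall l, (l < n)%N -> (leaf_wt w l).2 = 0%N.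

Definition min_gen n (w : assign n) : Prop :=
  [/\ inP w, w <> asg0 n &
      forall u v, inP u -> inP v -> w = asg_add u v -> u = asg0 n \/ v = asg0 n].

Definition triple n := {t : 'I_n * 'I_n * 'I_n | (t.1.1 < t.1.2 < t.2)%N}.
HB.instance Definition _ n := Finite.on (triple n).

(* inner edge m separates leaves a and b: removing it splits the vertices
   into those <= m and those > m *)
Definition separates n (m a b : nat) : bool :=
  (leaf_vert n a <= m)%N != (leaf_vert n b <= m)%N.

(* the support of w equals the subtree of T0 spanned by leaves i, j, k:
   a leaf edge is in that subtree iff its leaf is among i, j, k; an inner
   edge is in it iff it separates two of i, j, k *)
Definition support_is_span n (w : assign n) (i j k : nat) : Prop :=
  (forall l, (l < n)%N -> (leaf_wt w l != (0, 0)%N) = [|| l == i, l == j | l == k]) /\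
  (forall m, (m < n - 3)%N ->
     (inner_wt w m != (0, 0)%N) = [|| separates n m i j, separates n m j k | separates n m i k]).

(* Polynomial rings.  C[w_{ijk}] has one variable per increasing triple     *)
(* (indexed through enum_val); C[P_T0] is realised inside the polynomial    *)
(* ring C[y_x : x vertex-entry slot] as the span of the monomials y^w,      *)
(* w in P_T0, and the surjection sends w_t to y^(w_t).                      *)
Definition nvars n := #|{: triple n}|.
Definition nslots n := #|{: 'I_(n - 2) * 'I_9}|.

Definition monom n (w : assign n) : 'X_{1..nslots n} :=
  [multinom w (enum_val i) | i < nslots n].

Definition var n (t : triple n) : {mpoly algC[nvars n]} := 'X_(enum_rank t).

Definition phi n (wf : triple n -> assign n) (p : {mpoly algC[nvars n]})
  : {mpoly algC[nslots n]} :=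
  p \mPo [tuple 'X_[monom (wf (enum_val i))] | i < nvars n].

Definition kerI n (wf : triple n -> assign n) (p : {mpoly algC[nvars n]}) : Prop :=
  phi wf p = 0%R.

Definition ideal_gen (R : comNzRingType) (S : R -> Prop) (f : R) : Prop :=
  exists s : seq (R * R), (forall q, q \in s -> S q.2) /\
    f = (\sum_(q <- s) q.1 * q.2)%R.

Definition binom n (f : {mpoly algC[nvars n]}) : Prop :=
  exists t u v x : triple n,
    [/\ (val v).1.1 = minn (val t).1.1 (val u).1.1 :> nat,
        (val v).1.2 = minn (val t).1.2 (val u).1.2 :> nat &
        (val v).2 = minn (val t).2 (val u).2 :> nat] /\
    [/\ (val x).1.1 = maxn (val t).1.1 (val u).1.1 :> nat,
        (val x).1.2 = maxn (val t).1.2 (val u).1.2 :> nat &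
        (val x).2 = maxn (val t).2 (val u).2 :> nat] /\
    f = (var t * var u - var v * var x)%R.

Definition J3n n (f : {mpoly algC[nvars n]}) : Prop := ideal_gen (@binom n) f.

Definition tri1 n (t : triple n) : nat := (val t).1.1.
Definition tri2 n (t : triple n) : nat := (val t).1.2.
Definition tri3 n (t : triple n) : nat := (val t).2.
Definition supp_span n (w : assign n) (t : triple n) : Prop :=
  support_is_span w (tri1 t) (tri2 t) (tri3 t).

(* Main.v *)
Require Import Defs.
From HB Require Import structures.
From mathcomp Require Import all_boot all_order all_algebra all_field.
From mathcomp Require Import mpoly.
From mathcomp Require Import zify.
From mathcomp Require Import ring.
From Stdlib Require Import ClassicalEpsilon.
Set Implicit Arguments. Unset Strict Implicit. Unset Printing Implicit Defensive.
Import GRing.Theory.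

Section Part1.


Definition pre (f : nat -> nat) (l : nat) : nat := \sum_(y < l.+1) f y.

Lemma pre0 f : pre f 0 = f 0.
Proof. by rewrite /pre big_ord_recr big_ord0. Qed.
Lemma preS f l : pre f l.+1 = pre f l + f l.+1.
Proof. by rewrite /pre big_ord_recr. Qed.
Lemma pre_le f l m : l <= m -> pre f l <= pre f m.
Proof.
move=> /subnKC <-; elim: (m - l) => [|k IH]; first by rewrite addn0.
by rewrite addnS preS; apply: leq_trans IH (leq_addr _ _).
Qed.
Lemma pre_ge f l : f l <= pre f l.
Proof. by case: l => [|l]; rewrite ?pre0 ?preS ?leq_addl. Qed.
Lemma pre_zero f l : (forall y, y <= l -> f y = 0) -> pre f l = 0.
Proof.
elim: l => [|l IH] H; first by rewrite pre0 H.
by rewrite preS IH ?H // => y Hy; apply: H; lia.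
Qed.
Lemma pre_const f l m : l <= m -> (forall y, l < y <= m -> f y = 0) -> pre f m = pre f l.
Proof.
move=> /subnKC <-; elim: (m - l) => [|k IH] H; first by rewrite addn0.
rewrite addnS preS (H (l + k).+1); last lia.
rewrite addn0 IH // => y Hy; apply: H; lia.
Qed.
Lemma pre_delta c l : pre (fun y => nat_of_bool (c == y)) l = (c <= l).
Proof.
elim: l => [|l IH]; first by rewrite pre0; case: c.
rewrite preS IH; case: (ltngtP c l.+1) => H; rewrite ?H /=; lia.
Qed.
Lemma pre_add f g l : pre (fun y => f y + g y) l = pre f l + pre g l.
Proof. by rewrite /pre big_split. Qed.
Lemma pre_ext f g l : (forall y, f y = g y) -> pre f l = pre g l.
Proof. by move=> H; apply: eq_bigr => y _. Qed.
Lemma pre_sub_delta f c l : 0 < f c ->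
  pre (fun y => f y - (c == y)) l = pre f l - (c <= l).
Proof.
move=> Hc; rewrite -pre_delta.
have -> : pre f l = pre (fun y => (f y - (c == y)) + (c == y)) l.
  apply: pre_ext => y; case: eqP => [<-|]; lia.
by rewrite pre_add addnK.
Qed.

Lemma ent_out n (w : assign n) m k : n - 2 <= m -> ent w m k = 0.
Proof. by move=> H; rewrite /ent insubF // ltnNge H. Qed.

Lemma ent_add n (u v : assign n) m k : ent (asg_add u v) m k = ent u m k + ent v m k.
Proof. by rewrite /ent; case: insubP => // m' _ _; rewrite ffunE. Qed.

Lemma ent_asg0 n m k : ent (asg0 n) m k = 0.
Proof. by rewrite /ent; case: insubP => // m' _ _; rewrite ffunE. Qed.

Lemma assign_ext n (u v : assign n) :
  (forall m k, m < n - 2 -> k < 9 -> ent u m k = ent v m k) -> u = v.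
Proof.
move=> H; apply/ffunP => [[m k]].
have := H m k (ltn_ord m) (ltn_ord k).
by rewrite /ent valK inord_val.
Qed.

Definition phiE (al be ga : nat -> nat) (m k : nat) : nat :=
  match k with
  | 0 => pre al m - pre be m.+1
  | 1 => be m.+1
  | 2 => al m.+1
  | 3 => pre be m - pre ga m.+1
  | 4 => be m.+1 + (pre be m - pre ga m.+1)
  | 5 => ga m.+1
  | 6 => be m.+1 + al m.+1
  | _ => 0 end.

Definition Phi n al be ga : assign n := [ffun p : 'I_(n - 2) * 'I_9 => phiE al be ga (val p.1) (val p.2)].

Lemma ent_Phi n al be ga m k : k < 9 ->
  ent (Phi n al be ga) m k = if m < n - 2 then phiE al be ga m k else 0.
Proof.
move=> Hk; rewrite /ent; case: insubP => [m' Hm <-|Hm]; last by rewrite (negbTE Hm).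
by rewrite ffunE /= inordK // ltn_ord.
Qed.

Definition valid n (al be ga : nat -> nat) : Prop :=
  [/\ forall l, n <= l -> [/\ al l = 0, be l = 0 & ga l = 0],
      be 0 = 0 /\ ga 0 = 0,
      forall l, pre be l.+1 <= pre al l,
      forall l, pre ga l.+1 <= pre be l &
      pre al n.-1 = pre be n.-1 /\ pre be n.-1 = pre ga n.-1].

Lemma leaf_wtE n (w : assign n) l : 3 <= n -> l < n ->
  leaf_wt w l = if l == 0 then side_wt w 0 1 else if l == n.-1 then side_wt w (n-3) 3
                else side_wt w l.-1 2.
Proof.
move=> hn hl; rewrite /leaf_wt /leaf_vert /leaf_side.
have [->|l0] := eqVneq l 0; first by [].
have [->|ln] := eqVneq l n.-1.
  rewrite ifF; last lia. by rewrite ifT; last lia.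
have [H1|H1] := leqP l 1; first by have -> : l = 1 by lia.
by case: ifP => // H2; congr side_wt; lia.
Qed.

Lemma valid_inP n al be ga : 3 <= n -> valid n al be ga -> inP (Phi n al be ga).
Proof.
move=> hn [Hsup [Hb0 Hg0] HAB HBC [Ht1 Ht2]].
split; first split.
- move=> m hm; rewrite /BZ_at !ent_Phi // hm /=; split; lia.
- move=> m hm; have h1 : m < n - 2 by lia.
  have h2 : m.+1 < n - 2 by lia.
  rewrite /side_wt /= !ent_Phi // h1 h2.
  rewrite /swap /=; have := HAB m; have := HAB m.+1; have := HBC m; have := HBC m.+1.
  rewrite !preS; move=> *; congr pair; lia.
- move=> l hl; rewrite leaf_wtE //.
  have [_|l0] := eqVneq l 0.
    rewrite /side_wt /= !ent_Phi // ifT; last lia.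
    have := HBC 0; rewrite /= !preS !pre0 Hb0 Hg0; case: ifP; lia.
  have [_|ln] := eqVneq l n.-1; last by rewrite /side_wt /= !ent_Phi //; case: ifP.
  rewrite /side_wt /= !ent_Phi // ifT; last lia.
  move: Ht1 Ht2 (HAB (n-3)) (HAB (n-2)) (HBC (n-2)).
  case: n hn {Hsup hl l0} => [|[|[|n]]] // _.
  have -> : n.+3.-1 = n.+2 by [].
  have -> : n.+3 - 3 = n by lia.
  have -> : n.+3 - 2 = n.+1 by lia.
  rewrite /= !preS ltnSn; lia.
Qed.

End Part1.

Section Part2.


Definition ral n (x : assign n) l :=
  if l == 0 then ent x 0 0 + ent x 0 1 else ent x l.-1 2.
Definition rbe n (x : assign n) l := if l == 0 then 0 else ent x l.-1 1.
Definition rga n (x : assign n) l :=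
  if l == 0 then 0 else if l == n.-1 then ent x (n-3) 1 + ent x (n-3) 3 else ent x l.-1 5.

Lemma ralS n (x : assign n) l : ral x l.+1 = ent x l 2. Proof. by []. Qed.
Lemma rbeS n (x : assign n) l : rbe x l.+1 = ent x l 1. Proof. by []. Qed.
Lemma rgaS n (x : assign n) l : l.+1 != n.-1 -> rga x l.+1 = ent x l 5.
Proof. by move=> H; rewrite /rga /= (negbTE H). Qed.

Lemma P_vertex n (x : assign n) m : 3 <= n -> inP x -> m < n - 2 ->
  [/\ ent x m 7 = 0, ent x m 8 = 0, ent x m 1 + ent x m 2 = ent x m 6,
      ent x m 4 = ent x m 1 + ent x m 3 & ent x m 5 + ent x m 6 = ent x m 5 + ent x m 6].
Proof.
move=> hn [[HBZ _] HL] hm.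
have := HL m.+1; rewrite leaf_wtE //; last lia.
rewrite (_ : (m.+1 == n.-1) = false) /=; last lia.
rewrite /side_wt /= => /(_ ltac:(lia)) H.
have [h1 h2 h3] := HBZ m hm; simpl in h1, h2, h3.
split; lia.
Qed.

Lemma P_first n (x : assign n) : 3 <= n -> inP x -> ent x 0 3 = 0 /\ ent x 0 5 = 0.
Proof.
move=> hn [_ HL]; have := HL 0; rewrite leaf_wtE //; last lia.
rewrite /side_wt /= => /(_ ltac:(lia)) H; lia.
Qed.

Lemma P_last n (x : assign n) : 3 <= n -> inP x -> ent x (n-3) 2 = 0 /\ ent x (n-3) 0 = 0.
Proof.
move=> hn [_ HL]; have := HL n.-1; rewrite leaf_wtE //; last lia.
rewrite ifF; last lia. rewrite eqxx.
rewrite /side_wt /= => /(_ ltac:(lia)) H; lia.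
Qed.

Lemma P_match n (x : assign n) m : 3 <= n -> inP x -> m < n - 3 ->
  ent x m 1 + ent x m 3 = ent x m.+1 3 + ent x m.+1 5 /\
  ent x m 2 + ent x m 0 = ent x m.+1 0 + ent x m.+1 1.
Proof.
move=> hn Px hm; have [[_ HM] _] := Px.
have := HM m hm; rewrite /side_wt /swap /= => [[H1 H2]].
have hm2 : m < n - 2 by lia.
have [_ h8 _ h4 _] := P_vertex hn Px hm2.
split; lia.
Qed.

Lemma P_ind n (x : assign n) m : 3 <= n -> inP x -> m < n - 2 ->
  ent x m 0 + pre (rbe x) m.+1 = pre (ral x) m /\
  ent x m 3 + pre (rga x) m.+1 = pre (rbe x) m.
Proof.
move=> hn Px; elim: m => [|m IH] hm.
  have [h3 h5] := P_first hn Px.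
  rewrite !preS !pre0 /ral /rbe /rga /= ifF; last lia.
  split; lia.
have [IH1 IH2] := IH (ltac:(lia)).
have hm3 : m < n - 3 by lia.
have [M1 M2] := P_match hn Px hm3.
rewrite (preS (rbe x) m.+1) (preS (ral x) m) (preS (rga x) m.+1).
rewrite !ralS !rbeS rgaS; last lia.
have := preS (rbe x) m; rewrite rbeS => ?; split; lia.
Qed.

Lemma P_Phi n (x : assign n) : 3 <= n -> inP x -> x = Phi n (ral x) (rbe x) (rga x).
Proof.
move=> hn Px; apply: assign_ext => m k hm hk; rewrite ent_Phi // hm.
have [I1 I2] := P_ind hn Px hm.
have [h7 h8 h6 h4 _] := P_vertex hn Px hm.
have E1 : rbe x m.+1 = ent x m 1 by [].
have E2 : ral x m.+1 = ent x m 2 by [].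
have E3 : rga x m.+1 = ent x m 5 by rewrite /rga /= ifF //; lia.
do 9! [case: k hk => [|k] hk; first by rewrite /= ?E1 ?E2 ?E3; lia].

by [].
Qed.

Lemma pre_tail f k l : (forall y, k < y -> f y = 0) -> k <= l -> pre f l = pre f k.
Proof. move=> H hl; apply: pre_const => // y hy; apply: H; lia. Qed.

Lemma P_valid n (x : assign n) : 3 <= n -> inP x -> valid n (ral x) (rbe x) (rga x).
Proof.
move=> hn Px.
have [L1 L2] := P_last hn Px.
have hn3 : n - 3 < n - 2 by lia.
have [I1 I2] := P_ind hn Px hn3.
have Za : forall y, n - 3 < y -> ral x y = 0.
  move=> y hy; rewrite /ral ifF; last lia.
  have [->//|/eqP ne] := eqVneq y.-1 (n-3).
  by rewrite ent_out //; lia.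
have Zb : forall y, n - 2 < y -> rbe x y = 0.
  by move=> y hy; rewrite /rbe ifF ?ent_out //; lia.
have Zg : forall y, n - 1 < y -> rga x y = 0.
  by move=> y hy; rewrite /rga ifF ?ifF ?ent_out //; lia.
have Bn2 : rbe x (n-2) = ent x (n-3) 1.
  by rewrite /rbe ifF; [have -> : (n-2).-1 = n - 3 by lia|lia].
have Gn1 : rga x n.-1 = ent x (n-3) 1 + ent x (n-3) 3.
  by rewrite /rga ifF ?eqxx //; lia.
have PA : forall l, n - 3 <= l -> pre (ral x) l = pre (ral x) (n-3).
  by move=> l; apply: pre_tail.
have PB : forall l, n - 2 <= l -> pre (rbe x) l = pre (rbe x) (n-2).
  by move=> l; apply: pre_tail.
have PC : forall l, n - 1 <= l -> pre (rga x) l = pre (rga x) (n-1).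
  by move=> l; apply: pre_tail.
have EB : pre (rbe x) (n-2) = pre (rbe x) (n-3) + ent x (n-3) 1.
  by rewrite -Bn2 (_ : n - 2 = (n-3).+1) ?preS //; lia.
have EC : pre (rga x) (n-1) = pre (rga x) (n-2) + ent x (n-3) 1 + ent x (n-3) 3.
  by rewrite (_ : n - 1 = (n-2).+1) ?preS; [rewrite (_ : (n-2).+1 = n.-1) ?Gn1; [lia|lia]|lia].
have EC2 : pre (rga x) (n-2) = pre (rga x) (n-3).+1 by congr pre; lia.
split.
- move=> l hl; split; [apply: Za|apply: Zb|apply: Zg]; lia.
- by [].
- move=> l; have [hl|hl] := ltnP l (n-2).
    by have [] := P_ind hn Px hl; lia.
  rewrite PB; last lia. rewrite (PA l); last lia.
  rewrite (_ : n - 2 = (n-3).+1); last lia. lia.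
- move=> l; have [hl|hl] := ltnP l (n-2).
    by have [] := P_ind hn Px hl; lia.
  rewrite PC; last lia. rewrite (PB l); last lia.
  rewrite EC EB EC2; lia.
- have e1 : n.-1 = n - 1 by lia.
  rewrite e1 PA; last lia. rewrite PB; last lia.
  have e2 : (n-3).+1 = n-2 by lia. rewrite e2 in I1. split; lia.
Qed.

End Part2.

Section Part3.


Lemma valid_facts n al be ga : 3 <= n -> valid n al be ga ->
  [/\ al n.-1 = 0, al (n-2) = 0, be n.-1 = 0, ga 1 = 0 & pre be (n-2) = pre al (n-3)].
Proof.
move=> hn [Hsup [Hb0 Hg0] HAB HBC [Ht1 Ht2]].
have := HBC 0; rewrite preS !pre0 Hb0 Hg0 => G1.
move: Ht1 Ht2 (HAB (n-3)) (HAB (n-2)) (HBC (n-2)).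
case: n hn {Hsup} => [|[|[|n]]] // _.
have -> : n.+3.-1 = n.+2 by [].
have -> : n.+3 - 3 = n by lia.
have -> : n.+3 - 2 = n.+1 by lia.
rewrite /= !preS => *; split; lia.
Qed.

Lemma pre_eq0 f l y : pre f l = 0 -> y <= l -> f y = 0.
Proof. move=> H hy; have := pre_ge f y; have := pre_le f hy; lia. Qed.

Lemma R_Phi n al be ga : 3 <= n -> valid n al be ga -> forall l,
  [/\ ral (Phi n al be ga) l = al l, rbe (Phi n al be ga) l = be l &
      rga (Phi n al be ga) l = ga l].
Proof.
move=> hn V; have [Hsup [Hb0 Hg0] HAB HBC [Ht1 Ht2]] := V.
have [F1 F2 F3 F4 F5] := valid_facts hn V.
move=> l; rewrite /ral /rbe /rga.
have [->|l0] := eqVneq l 0.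
  rewrite /= !ent_Phi // ifT; last lia.
  rewrite /= preS !pre0 Hb0 Hg0; have := HAB 0; rewrite preS !pre0 Hb0 => H; rewrite ifT; [split => //; lia | lia].
have l0' : 0 < l by rewrite lt0n.
have Hout : forall f : nat -> nat, (forall y, n <= y -> f y = 0) ->
   f n.-1 = 0 -> (if l.-1 < n - 2 then f l.-1.+1 else 0) = f l.
  move=> f Hf Hf1; case: ifP => H; first by congr f; lia.
  have [->//|ne] := eqVneq l n.-1. by rewrite Hf //; lia.
have el : l.-1.+1 = l by lia.
split.
- rewrite ent_Phi //= Hout // => y hy; by case: (Hsup y hy).
- rewrite ent_Phi //= Hout // => y hy; by case: (Hsup y hy).
- have [->|ln] := eqVneq l n.-1.
    rewrite !ent_Phi // ifT; last lia.
    have e1 : (n - 3).+1 = n - 2 by lia.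
    rewrite /= e1.
    move: Ht1 Ht2 F5 F3 (HBC (n-3)).
    case: n hn {e1 V Hsup F1 F2 F4 Hout l0 el} => [|[|[|n]]] // _.
    have -> : n.+3.-1 = n.+2 by [].
    have -> : n.+3 - 3 = n by lia.
    have -> : n.+3 - 2 = n.+1 by lia.
    rewrite /= !preS => *; rewrite ltnSn; lia.
  rewrite ent_Phi //; case: ifP => H; first by rewrite /= el.
  by case: (Hsup l) => //; lia.
Qed.

Lemma tri_lt n (t : triple n) : [/\ tri1 t < tri2 t, tri2 t < tri3 t & tri3 t < n].
Proof. rewrite /tri1 /tri2 /tri3; case/andP: (valP t) => h1 h2; split => //; exact: ltn_ord. Qed.

Definition d1 n (t : triple n) l : nat := tri1 t == l.
Definition d2 n (t : triple n) l : nat := tri2 t == l.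
Definition d3 n (t : triple n) l : nat := tri3 t == l.

Lemma valid_d n (t : triple n) : valid n (d1 t) (d2 t) (d3 t).
Proof.
have [h1 h2 h3] := tri_lt t.
rewrite /valid /d1 /d2 /d3; split.
- move=> l hl; split; apply/eqP; rewrite eqb0; apply/eqP; lia.
- split; apply/eqP; rewrite eqb0; apply/eqP; lia.
- move=> l; rewrite !pre_delta; case: leqP; case: leqP => //; lia.
- move=> l; rewrite !pre_delta; case: leqP; case: leqP => //; lia.
- rewrite !pre_delta; have -> : tri1 t <= n.-1 by lia.
  have -> : tri2 t <= n.-1 by lia. by have -> : tri3 t <= n.-1 by lia.
Qed.

Definition W n (t : triple n) : assign n := Phi n (d1 t) (d2 t) (d3 t).

Definition S n (ts : seq (triple n)) : assign n := foldr (fun t acc => asg_add (W t) acc) (asg0 n) ts.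

Definition c1 n (ts : seq (triple n)) l := count (fun t => tri1 t == l) ts.
Definition c2 n (ts : seq (triple n)) l := count (fun t => tri2 t == l) ts.
Definition c3 n (ts : seq (triple n)) l := count (fun t => tri3 t == l) ts.

Lemma side_wt_add n (u v : assign n) m s :
  side_wt (asg_add u v) m s = ((side_wt u m s).1 + (side_wt v m s).1, (side_wt u m s).2 + (side_wt v m s).2).
Proof.
rewrite /side_wt !ent_add.
by case: ifP => _; [|case: ifP => _]; rewrite /=; congr pair; lia.
Qed.

Lemma inP_add n (u v : assign n) : inP u -> inP v -> inP (asg_add u v).
Proof.
move=> [[Bu Mu] Lu] [[Bv Mv] Lv]; split; first split.
- move=> m hm; have := Bu m hm; have := Bv m hm; rewrite /BZ_at !ent_add /=.
  case=> a1 a2 a3 [b1 b2 b3]; split; lia.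
- move=> m hm; rewrite !side_wt_add (Mu m hm) (Mv m hm) /swap /=; congr pair; lia.
- move=> l hl; have := Lu l hl; have := Lv l hl; rewrite /leaf_wt side_wt_add /=; lia.
Qed.

Lemma inP_0 n : inP (asg0 n).
Proof.
split; first split.
- by move=> m hm; rewrite /BZ_at !ent_asg0.
- by move=> m hm; rewrite /side_wt !ent_asg0.
- by move=> l hl; rewrite /leaf_wt /side_wt !ent_asg0; repeat case: ifP.
Qed.

Lemma inP_W n (t : triple n) : 3 <= n -> inP (W t).
Proof. move=> hn; exact: valid_inP (valid_d t). Qed.

Lemma inP_S n (ts : seq (triple n)) : 3 <= n -> inP (S ts).
Proof.
move=> hn; elim: ts => [|t ts IH] /=; first exact: inP_0.
exact: inP_add (inP_W t hn) IH.
Qed.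

Lemma R_add n (u v : assign n) l :
  [/\ ral (asg_add u v) l = ral u l + ral v l, rbe (asg_add u v) l = rbe u l + rbe v l &
      rga (asg_add u v) l = rga u l + rga v l].
Proof.
rewrite /ral /rbe /rga !ent_add; split; case: ifP => //; try case: ifP => //; lia.
Qed.

Lemma R_S n (ts : seq (triple n)) l : 3 <= n ->
  [/\ ral (S ts) l = c1 ts l, rbe (S ts) l = c2 ts l & rga (S ts) l = c3 ts l].
Proof.
move=> hn; elim: ts => [|t ts [IH1 IH2 IH3]] /=.
  by rewrite /ral /rbe /rga !ent_asg0; split; case: ifP => //; case: ifP.
have [A1 A2 A3] := R_add (W t) (S ts) l.
have [B1 B2 B3] := R_Phi hn (valid_d t) l.
rewrite A1 A2 A3 B1 B2 B3 IH1 IH2 IH3; split => //.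
Qed.

Lemma Phi_ext n al be ga al' be' ga' :
  (forall l, al l = al' l) -> (forall l, be l = be' l) -> (forall l, ga l = ga' l) ->
  Phi n al be ga = Phi n al' be' ga'.
Proof.
move=> Ha Hb Hc; apply: assign_ext => m k hm hk; rewrite !ent_Phi // hm.
rewrite /phiE (pre_ext _ Ha) (pre_ext m Hb) (pre_ext m.+1 Hb) (pre_ext _ Hc) Ha Hb Hc.
by [].
Qed.

End Part3.

Section Part4.


Lemma pre_pos f l : 0 < pre f l -> exists y, 0 < f y.
Proof.
elim: l => [|l IH]; first by rewrite pre0 => H; exists 0.
rewrite preS; case: (posnP (f l.+1)) => [->|H]; last by exists l.+1.
by rewrite addn0.
Qed.

Lemma peel n : 3 <= n -> forall k al be ga, valid n al be ga -> pre al n.-1 = k ->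
  exists ts : seq (triple n), forall l, [/\ al l = c1 ts l, be l = c2 ts l & ga l = c3 ts l].
Proof.
move=> hn; elim=> [|k IH] al be ga V Hk; have [Hsup [Hb0 Hg0] HAB HBC [Ht1 Ht2]] := V.
  exists [::] => l; case: (leqP n l) => hl; first by have [-> -> ->] := Hsup l hl.
  rewrite /c1 /c2 /c3 /=; split; apply: (@pre_eq0 _ n.-1) => //; lia.
have exA : exists l, 0 < al l by apply: (@pre_pos _ n.-1); lia.
have exB : exists l, 0 < be l by apply: (@pre_pos _ n.-1); lia.
have exC : exists l, 0 < ga l by apply: (@pre_pos _ n.-1); lia.
case: (ex_minnP exA) => i Hi Hmi.
case: (ex_minnP exB) => j Hj Hmj.
case: (ex_minnP exC) => c Hc Hmc.
have hij : i < j.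
  rewrite ltnNge; apply/negP => hji.
  have j0 : 0 < j by case: j Hj {Hmj hji} => //; rewrite Hb0.
  have := HAB j.-1; rewrite (_ : j.-1.+1 = j); last lia.
  rewrite (@pre_zero al); last first.
    move=> y hy; case: (posnP (al y)) => // H; have := Hmi y H; lia.
  have := pre_ge be j; lia.
have hjc : j < c.
  rewrite ltnNge; apply/negP => hcj.
  have c0 : 0 < c by case: c Hc {Hmc hcj} => //; rewrite Hg0.
  have := HBC c.-1; rewrite (_ : c.-1.+1 = c); last lia.
  rewrite (@pre_zero be); last first.
    move=> y hy; case: (posnP (be y)) => // H; have := Hmj y H; lia.
  have := pre_ge ga c; lia.
have hcn : c < n.
  rewrite ltnNge; apply/negP => hcn; have [_ _ hz] := Hsup c hcn; lia.
have hi : i < n by lia.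
have hj : j < n by lia.
have tP : (i < j < c) by rewrite hij hjc.
pose t : triple n := exist (fun t : 'I_n * 'I_n * 'I_n => (t.1.1 < t.1.2 < t.2)%N) ((Ordinal hi, Ordinal hj), Ordinal hcn) tP.
pose al' := fun l => al l - (i == l).
pose be' := fun l => be l - (j == l).
pose ga' := fun l => ga l - (c == l).
have PA : forall l, pre al' l = pre al l - (i <= l) by move=> l; apply: pre_sub_delta.
have PB : forall l, pre be' l = pre be l - (j <= l) by move=> l; apply: pre_sub_delta.
have PC : forall l, pre ga' l = pre ga l - (c <= l) by move=> l; apply: pre_sub_delta.
have V' : valid n al' be' ga'.
  split.
  - move=> l hl; have [h1 h2 h3] := Hsup l hl; rewrite /al' /be' /ga' h1 h2 h3; done.
  - by rewrite /be' /ga' Hb0 Hg0.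
  - move=> l; rewrite PA PB; have := HAB l.
    case: (leqP j l.+1) => hjl.
      have -> : i <= l by lia. lia.
    rewrite (@pre_zero be); first by rewrite sub0n.
    move=> y hy; case: (posnP (be y)) => // H; have := Hmj y H; lia.
  - move=> l; rewrite PB PC; have := HBC l.
    case: (leqP c l.+1) => hcl.
      have -> : j <= l by lia. lia.
    rewrite (@pre_zero ga); first by rewrite sub0n.
    move=> y hy; case: (posnP (ga y)) => // H; have := Hmc y H; lia.
  - rewrite PA PB PC.
    have -> : i <= n.-1 by lia. have -> : j <= n.-1 by lia. have -> : c <= n.-1 by lia.
    lia.
have Hk' : pre al' n.-1 = k.
  rewrite PA; have -> : i <= n.-1 by lia. lia.
have [ts Hts] := IH al' be' ga' V' Hk'.
exists (t :: ts) => l; have [e1 e2 e3] := Hts l.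
rewrite /c1 /c2 /c3 /= -/(c1 ts l) -/(c2 ts l) -/(c3 ts l) -e1 -e2 -e3 /al' /be' /ga'.
rewrite /tri1 /tri2 /tri3 /=.
split; case: eqP => [<-|]; lia.
Qed.

Lemma decomp n (x : assign n) : 3 <= n -> inP x -> exists ts, x = S ts.
Proof.
move=> hn Px; have V := P_valid hn Px.
have [ts Hts] := peel hn V (erefl _).
exists ts; rewrite (P_Phi hn Px) (P_Phi hn (inP_S ts hn)).
apply: Phi_ext => l; have [? ? ?] := Hts l; have [? ? ?] := R_S ts l hn; congruence.
Qed.

Lemma c1_total n (ts : seq (triple n)) : pre (c1 ts) n.-1 = size ts.
Proof.
elim: ts => [|t ts IH] /=; first by apply: pre_zero.
rewrite (@pre_ext _ (fun y => d1 t y + c1 ts y)) // pre_add pre_delta IH.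
have [h1 h2 h3] := tri_lt t; have -> : tri1 t <= n.-1 by lia. by [].
Qed.

Lemma W_neq0 n (t : triple n) : 3 <= n -> W t <> asg0 n.
Proof.
move=> hn E; have [h _ _] := R_Phi hn (valid_d t) (tri1 t).
move: h; rewrite -/(W t) E /d1 eqxx /ral !ent_asg0; by case: ifP.
Qed.

Lemma S_size_eq n (us vs : seq (triple n)) : 3 <= n -> S us = S vs -> size us = size vs.
Proof.
move=> hn E; rewrite -!c1_total; apply: pre_ext => l.
have [h1 _ _] := R_S us l hn; have [h2 _ _] := R_S vs l hn; congruence.
Qed.

Lemma W_irred n (t : triple n) u v : 3 <= n -> inP u -> inP v -> W t = asg_add u v ->
  u = asg0 n \/ v = asg0 n.
Proof.
move=> hn Pu Pv E.
have [us Eu] := decomp hn Pu; have [vs Ev] := decomp hn Pv; subst u v.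
have : S [:: t] = S (us ++ vs).
  rewrite /= (_ : asg_add (W t) (asg0 n) = W t); last by apply/ffunP => p; rewrite !ffunE addn0.
  rewrite E; elim: us {E Pu} => [|a us IH] /=.
    by apply/ffunP => p; rewrite !ffunE.
  by rewrite -IH; apply/ffunP => p; rewrite !ffunE addnA.
move/(S_size_eq hn); rewrite size_cat /= => Hsz.
case: us Hsz {E Pu} => [|a us] Hsz; first by left.
case: vs Hsz {Pv} => [|b vs] Hsz; first by right.
by move: Hsz; rewrite /=; lia.
Qed.

Lemma W_min_gen n (t : triple n) : 3 <= n -> min_gen (W t).
Proof.
move=> hn; split; [exact: inP_W|exact: W_neq0|].
move=> u v Pu Pv E; exact: W_irred E.
Qed.

Lemma min_gen_W n (w : assign n) : 3 <= n -> min_gen w -> exists s, w = W s.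
Proof.
move=> hn [Pw nz irr]; have [[|s ws] E] := decomp hn Pw; first by subst.
exists s; move: E => /= E.
case: (irr _ _ (inP_W s hn) (inP_S ws hn) E) => [/(W_neq0 hn)//|Z].
by rewrite E Z; apply/ffunP => p; rewrite !ffunE addn0.
Qed.

End Part4.

Section Part5.


Lemma leaf_P n (x : assign n) l : 3 <= n -> inP x -> l < n ->
  leaf_wt x l = (ral x l + rbe x l + rga x l, 0).
Proof.
move=> hn Px hl; rewrite leaf_wtE //.
have [->|l0] := eqVneq l 0.
  have [h3 h5] := P_first hn Px; rewrite /side_wt /= /ral /rbe /rga /=; congr pair; lia.
have [->|ln] := eqVneq l n.-1.
  have [L1 L2] := P_last hn Px.
  have hn3 : n - 3 < n - 2 by lia.
  have [h7 h8 h6 h4 _] := P_vertex hn Px hn3.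
  rewrite /side_wt /= /ral /rbe /rga ifF; last lia.
  rewrite eqxx !(@ent_out _ _ n.-2); try lia.
  rewrite (_ : (n.-1 == 0) = false) /=; last lia. congr pair; lia.
have hl2 : l.-1 < n - 2 by lia.
have [h7 h8 h6 h4 _] := P_vertex hn Px hl2.
rewrite /side_wt /= /ral /rbe /rga (negbTE l0) (negbTE ln); congr pair; lia.
Qed.

Lemma leaf_W n (t : triple n) l : 3 <= n -> l < n ->
  leaf_wt (W t) l = ((tri1 t == l) + (tri2 t == l) + (tri3 t == l), 0).
Proof.
move=> hn hl; rewrite leaf_P //; last exact: inP_W.
by have [-> -> ->] := R_Phi hn (valid_d t) l.
Qed.

Lemma lv_le n a m : a < n -> m < n - 3 -> (leaf_vert n a <= m) = (a <= m.+1).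
Proof. move=> ha hm; rewrite /leaf_vert; case: ifP => h1; [|case: ifP => h2]; lia. Qed.

Lemma inner_W n (t : triple n) m : 3 <= n -> m < n - 3 ->
  inner_wt (W t) m = ((tri2 t == m.+1) + ((tri2 t <= m) - (tri3 t <= m.+1)),
                      (tri1 t == m.+1) + ((tri1 t <= m) - (tri2 t <= m.+1))).
Proof.
move=> hn hm; have hm2 : m < n - 2 by lia.
rewrite /inner_wt /side_wt /W /= !ent_Phi // hm2.
rewrite /= !pre_delta /d1 /d2 /d3; congr pair; lia.
Qed.

Lemma supp_W n (t : triple n) : 3 <= n -> supp_span (W t) t.
Proof.
move=> hn; have [h1 h2 h3] := tri_lt t; split.
  move=> l hl; rewrite leaf_W // xpair_eqE; lia.
move=> m hm; rewrite inner_W // xpair_eqE /separates !lv_le //; lia.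
Qed.

Lemma tri_eq n (s t : triple n) : tri1 s = tri1 t -> tri2 s = tri2 t -> tri3 s = tri3 t -> s = t.
Proof.
rewrite /tri1 /tri2 /tri3.
case: s => [[[a b] c] ps]; case: t => [[[a' b'] c'] pt] /= h1 h2 h3.
apply: val_inj => /=.
have -> : a = a' by apply: val_inj.
have -> : b = b' by apply: val_inj.
by have -> : c = c' by apply: val_inj.
Qed.

Lemma supp_W_inj n (s t : triple n) : 3 <= n -> supp_span (W s) t -> s = t.
Proof.
move=> hn [HL _]; have [s1 s2 s3] := tri_lt s; have [t1 t2 t3] := tri_lt t.
have mem : forall l, l < n -> [|| tri1 s == l, tri2 s == l | tri3 s == l] =
                             [|| l == tri1 t, l == tri2 t | l == tri3 t].
  move=> l hl; rewrite -HL // leaf_W // xpair_eqE /= andbT.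
  by case: (tri1 s == l); case: (tri2 s == l); case: (tri3 s == l).
have A1 := mem (tri1 s) ltac:(lia); rewrite eqxx /= in A1.
have A2 := mem (tri2 s) ltac:(lia); rewrite eqxx orbT /= in A2.
have A3 := mem (tri3 s) ltac:(lia); rewrite eqxx !orbT /= in A3.
have B1 := mem (tri1 t) ltac:(lia); rewrite eqxx /= in B1.
have B3 := mem (tri3 t) ltac:(lia); rewrite eqxx !orbT /= in B3.
move: A1 A2 A3 B1 B3 => /esym/or3P A1 /esym/or3P A2 /esym/or3P A3 /or3P B1 /or3P B3.
have e1 : tri1 s = tri1 t.
  by case: A1 => /eqP h1; case: B1 => /eqP h2; lia.
have e3 : tri3 s = tri3 t.
  by case: A3 => /eqP h1; case: B3 => /eqP h2; lia.
have e2 : tri2 s = tri2 t.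
  by case: A2 => /eqP h1; lia.
exact: tri_eq.
Qed.

End Part5.

Section Part6.


Definition omin n (a b : 'I_n) : 'I_n := if (a <= b)%N then a else b.
Definition omax n (a b : 'I_n) : 'I_n := if (a <= b)%N then b else a.
Lemma omin_val n (a b : 'I_n) : nat_of_ord (omin a b) = minn a b.
Proof. rewrite /omin /minn; case: leqP => h; case: ltnP => h'; lia. Qed.
Lemma omax_val n (a b : 'I_n) : nat_of_ord (omax a b) = maxn a b.
Proof. rewrite /omax /maxn; case: leqP => h; case: ltnP => h'; lia. Qed.

Lemma tmin_subproof n (t u : triple n) :
  ((omin (val t).1.1 (val u).1.1 < omin (val t).1.2 (val u).1.2)%N &&
   (omin (val t).1.2 (val u).1.2 < omin (val t).2 (val u).2)%N).
Proof.
rewrite !omin_val; have := tri_lt t; have := tri_lt u; rewrite /tri1 /tri2 /tri3.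
move=> [a1 a2 a3] [b1 b2 b3]; apply/andP; split; lia.
Qed.
Lemma tmax_subproof n (t u : triple n) :
  ((omax (val t).1.1 (val u).1.1 < omax (val t).1.2 (val u).1.2)%N &&
   (omax (val t).1.2 (val u).1.2 < omax (val t).2 (val u).2)%N).
Proof.
rewrite !omax_val; have := tri_lt t; have := tri_lt u; rewrite /tri1 /tri2 /tri3.
move=> [a1 a2 a3] [b1 b2 b3]; apply/andP; split; lia.
Qed.

Definition tmin n (t u : triple n) : triple n :=
  exist (fun p : 'I_n * 'I_n * 'I_n => (p.1.1 < p.1.2 < p.2)%N)
    ((omin (val t).1.1 (val u).1.1, omin (val t).1.2 (val u).1.2), omin (val t).2 (val u).2)
    (tmin_subproof t u).
Definition tmax n (t u : triple n) : triple n :=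
  exist (fun p : 'I_n * 'I_n * 'I_n => (p.1.1 < p.1.2 < p.2)%N)
    ((omax (val t).1.1 (val u).1.1, omax (val t).1.2 (val u).1.2), omax (val t).2 (val u).2)
    (tmax_subproof t u).

Lemma tmin1 n (t u : triple n) : tri1 (tmin t u) = minn (tri1 t) (tri1 u). Proof. exact: omin_val. Qed.
Lemma tmin2 n (t u : triple n) : tri2 (tmin t u) = minn (tri2 t) (tri2 u). Proof. exact: omin_val. Qed.
Lemma tmin3 n (t u : triple n) : tri3 (tmin t u) = minn (tri3 t) (tri3 u). Proof. exact: omin_val. Qed.
Lemma tmax1 n (t u : triple n) : tri1 (tmax t u) = maxn (tri1 t) (tri1 u). Proof. exact: omax_val. Qed.
Lemma tmax2 n (t u : triple n) : tri2 (tmax t u) = maxn (tri2 t) (tri2 u). Proof. exact: omax_val. Qed.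
Lemma tmax3 n (t u : triple n) : tri3 (tmax t u) = maxn (tri3 t) (tri3 u). Proof. exact: omax_val. Qed.

Lemma P_eq n (x y : assign n) : 3 <= n -> inP x -> inP y ->
  (forall l, [/\ ral x l = ral y l, rbe x l = rbe y l & rga x l = rga y l]) -> x = y.
Proof.
move=> hn Px Py H; rewrite (P_Phi hn Px) (P_Phi hn Py).
by apply: Phi_ext => l; case: (H l).
Qed.

Lemma hibi n (t u : triple n) : 3 <= n ->
  asg_add (W t) (W u) = asg_add (W (tmin t u)) (W (tmax t u)).
Proof.
move=> hn; apply: P_eq => //; try (apply: inP_add; exact: inP_W).
move=> l; have [a1 a2 a3] := R_add (W t) (W u) l.
have [b1 b2 b3] := R_add (W (tmin t u)) (W (tmax t u)) l.
rewrite a1 a2 a3 b1 b2 b3.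
have [-> -> ->] := R_Phi hn (valid_d t) l.
have [-> -> ->] := R_Phi hn (valid_d u) l.
have [-> -> ->] := R_Phi hn (valid_d (tmin t u)) l.
have [-> -> ->] := R_Phi hn (valid_d (tmax t u)) l.
rewrite /d1 /d2 /d3 tmin1 tmin2 tmin3 tmax1 tmax2 tmax3; split; lia.
Qed.

Lemma asg_addC n (x y : assign n) : asg_add x y = asg_add y x.
Proof. by apply/ffunP => p; rewrite !ffunE addnC. Qed.
Lemma asg_addA n (x y z : assign n) : asg_add x (asg_add y z) = asg_add (asg_add x y) z.
Proof. by apply/ffunP => p; rewrite !ffunE addnA. Qed.
Lemma asg_addI n (x y z : assign n) : asg_add x y = asg_add x z -> y = z.
Proof. by move=> /ffunP H; apply/ffunP => p; have := H p; rewrite !ffunE => /addnI. Qed.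

Section JJ.
Local Open Scope ring_scope.
Lemma J0 n : J3n (0 : {mpoly algC[nvars n]}).
Proof. by exists [::]; split => //; rewrite big_nil. Qed.
Lemma JD n (a b : {mpoly algC[nvars n]}) : J3n a -> J3n b -> J3n (a + b).
Proof.
move=> [s1 [H1 ->]] [s2 [H2 ->]]; exists (s1 ++ s2); split; last by rewrite big_cat.
by move=> q; rewrite mem_cat => /orP [/H1|/H2].
Qed.
Lemma JM n (r a : {mpoly algC[nvars n]}) : J3n a -> J3n (r * a).
Proof.
move=> [s [H ->]]; exists [seq (r * q.1, q.2) | q <- s]; split.
  by move=> q /mapP [q' hq ->] /=; apply: H.
by rewrite big_map mulr_sumr; apply: eq_bigr => q _; rewrite mulrA.
Qed.
Lemma JN n (a : {mpoly algC[nvars n]}) : J3n a -> J3n (- a).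
Proof. by move=> h; rewrite -mulN1r; apply: JM. Qed.
Lemma JB n (a b : {mpoly algC[nvars n]}) : J3n a -> J3n b -> J3n (a - b).
Proof. by move=> ha hb; apply: JD => //; apply: JN. Qed.
Lemma JZ n c (a : {mpoly algC[nvars n]}) : J3n a -> J3n (c *: a).
Proof. by move=> h; rewrite -mul_mpolyC; apply: JM. Qed.
Lemma Jbinom n (f : {mpoly algC[nvars n]}) : binom f -> J3n f.
Proof. by move=> h; exists [:: (1, f)]; split; [move=> q; rewrite inE => /eqP ->|rewrite big_seq1 mul1r]. Qed.
Lemma Jsum n (I : Type) (r : seq I) (F : I -> {mpoly algC[nvars n]}) :
  (forall i, J3n (F i)) -> J3n (\sum_(i <- r) F i).
Proof.
move=> H; elim: r => [|i r IH]; first by rewrite big_nil; apply: J0.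
by rewrite big_cons; apply: JD.
Qed.
End JJ.
Local Open Scope ring_scope.

Definition prodw n (ts : seq (triple n)) : {mpoly algC[nvars n]} := \prod_(t <- ts) var t.

Lemma J_hibi n (t u : triple n) :
  J3n (var t * var u - var (tmin t u) * var (tmax t u)).
Proof.
apply: Jbinom; exists t, u, (tmin t u), (tmax t u); split; last split => //.
  by rewrite -!/(tri1 _) -!/(tri2 _) -!/(tri3 _) tmin1 tmin2 tmin3.
by rewrite -!/(tri1 _) -!/(tri2 _) -!/(tri3 _) tmax1 tmax2 tmax3.
Qed.

Lemma straighten n (t : triple n) (r : seq (triple n)) : (3 <= n)%N ->
  exists r', [/\ J3n (prodw (t :: r) - prodw (foldr (@tmin n) t r :: r')),
    S (t :: r) = S (foldr (@tmin n) t r :: r') & size r' = size r].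
Proof.
move=> hn; elim: r => [|u r [r' [HJ HS Hsz]]].
  by exists [::]; split => //; rewrite subrr; apply: J0.
set m := foldr (@tmin n) t r in HJ HS *.
exists (tmax u m :: r'); split.
- move: HJ; rewrite /= /prodw !big_cons => HJ.
  set X := \prod_(j <- r) var j in HJ *; set Y := \prod_(j <- r') var j in HJ *.
  have -> : var t * (var u * X) - var (tmin u m) * (var (tmax u m) * Y) =
    var u * (var t * X - var m * Y) + (var u * var m - var (tmin u m) * var (tmax u m)) * Y
    by ring.
  apply: JD; [exact: JM|rewrite mulrC; apply: JM; exact: J_hibi].
- rewrite /= asg_addA (asg_addC (W t)) -asg_addA.
  move: HS; rewrite /= => ->; rewrite asg_addA hibi //.
  by rewrite -asg_addA.
- by rewrite /= Hsz.
Qed.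

End Part6.

Section Part7.


Lemma all_cons' T (a : pred T) x s : all a (x :: s) = a x && all a s. Proof. by []. Qed.
Lemma has_cons' T (a : pred T) x s : has a (x :: s) = a x || has a s. Proof. by []. Qed.

Lemma meet_spec n (f : triple n -> nat) :
  (forall a b, f (tmin a b) = minn (f a) (f b)) ->
  forall t r, all (fun s => f (foldr (@tmin n) t r) <= f s) (t :: r) /\
              has (fun s => f s == f (foldr (@tmin n) t r)) (t :: r).
Proof.
move=> Hf t; elim=> [|u r [IH1 IH2]].
  by rewrite all_cons' has_cons' leqnn eqxx.
have -> : foldr (@tmin n) t (u :: r) = tmin u (foldr (@tmin n) t r) by [].
rewrite Hf; set m := foldr (@tmin n) t r in IH1 IH2 *.
split.
  have sp : subpred (fun s => f m <= f s) (fun s => minn (f u) (f m) <= f s).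
    by move=> s h; lia.
  have H := sub_all sp IH1.
  move: H; rewrite all_cons' => /andP [h1 h2].
  rewrite !all_cons' h1 h2 andbT; lia.
case: (leqP (f u) (f m)) => h.
  rewrite has_cons'; apply/orP; right; rewrite has_cons'; apply/orP; left; apply/eqP; lia.
move: IH2; rewrite !has_cons' => /orP [/eqP H|H].
  by apply/orP; left; apply/eqP; lia.
apply/orP; right; apply/orP; right.
by apply: sub_has H => s /eqP h2; apply/eqP; lia.
Qed.

Lemma meet_le n (f : triple n -> nat) :
  (forall a b, f (tmin a b) = minn (f a) (f b)) ->
  forall t r u q,
  (forall l, count (fun s => f s == l) (t :: r) = count (fun s => f s == l) (u :: q)) ->
  (f (foldr (@tmin n) u q) <= f (foldr (@tmin n) t r))%N.
Proof.
move=> Hf t r u q Hc.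
have [_ H2] := meet_spec Hf t r.
have [H3 _] := meet_spec Hf u q.
move: H2; rewrite has_count Hc -has_count => /hasP [s' Hs' /eqP <-].
by move/allP: H3 => /(_ s' Hs').
Qed.

Local Open Scope ring_scope.
Lemma key n : (3 <= n)%N -> forall k (ts us : seq (triple n)), size ts = k -> S ts = S us ->
  J3n (prodw ts - prodw us)%R.
Proof.
move=> hn; elim=> [|k IH] ts us Hsz E.
  case: ts Hsz E => // _ E.
  have := S_size_eq hn E; case: us E => // _ _; rewrite subrr; exact: J0.
case: ts Hsz E => [//|t r] [Hsz] E.
have := S_size_eq hn E; case: us E => [//|u q] E _.
have Hc : forall l, [/\ c1 (t :: r) l = c1 (u :: q) l, c2 (t :: r) l = c2 (u :: q) l &
                     c3 (t :: r) l = c3 (u :: q) l].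
  move=> l; have [a1 a2 a3] := R_S (t :: r) l hn; have [b1 b2 b3] := R_S (u :: q) l hn.
  by rewrite -a1 -a2 -a3 -b1 -b2 -b3 E.
have Em : foldr (@tmin n) t r = foldr (@tmin n) u q.
  apply: tri_eq; apply/eqP; rewrite eqn_leq; apply/andP; split;
  (apply: meet_le; [first [exact: tmin1|exact: tmin2|exact: tmin3]|
     by move=> l; case: (Hc l)]).
have [r' [J1 S1 Z1]] := straighten t r hn.
have [q' [J2 S2 Z2]] := straighten u q hn.
rewrite -Em in J2 S2.
set m := foldr (@tmin n) t r in J1 S1 J2 S2.
have E' : S r' = S q'.
  apply: (@asg_addI _ (W m)); rewrite -[asg_add _ (S r')]/(S (m :: r')) -S1 E S2 //.
have J3 := IH r' q' ltac:(lia) E'.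
have -> : prodw (t :: r) - prodw (u :: q) =
  (prodw (t :: r) - prodw (m :: r')) + var m * (prodw r' - prodw q') -
  (prodw (u :: q) - prodw (m :: q')).
  rewrite /prodw !big_cons; ring.
apply: JB; [apply: JD => //; exact: JM|exact: J2].
Qed.

End Part7.

Section Part8.

Local Open Scope ring_scope.

Lemma monom_add n (u v : assign n) : monom (asg_add u v) = (monom u + monom v)%MM.
Proof. by apply/mnmP => i; rewrite mnmDE !mnmE ffunE. Qed.
Lemma monom0 n : monom (asg0 n) = 0%MM.
Proof. by apply/mnmP => i; rewrite mnm0E mnmE ffunE. Qed.
Lemma monom_inj n (u v : assign n) : monom u = monom v -> u = v.
Proof.
move/mnmP => H; apply/ffunP => p; have := H (enum_rank p).
by rewrite !mnmE enum_rankK.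
Qed.

Lemma phiM n (wf : triple n -> assign n) a b : phi wf (a * b) = phi wf a * phi wf b.
Proof. exact: rmorphM. Qed.
Lemma phi1 n (wf : triple n -> assign n) : phi wf 1 = 1.
Proof. exact: rmorph1. Qed.
Lemma phiB n (wf : triple n -> assign n) a b : phi wf (a - b) = phi wf a - phi wf b.
Proof. exact: rmorphB. Qed.
Lemma phiZ n (wf : triple n -> assign n) c a : phi wf (c *: a) = c *: phi wf a.
Proof. exact: comp_mpolyZ. Qed.
Lemma phi_sum n (wf : triple n -> assign n) I (r : seq I) (F : I -> _) :
  phi wf (\sum_(i <- r) F i) = \sum_(i <- r) phi wf (F i).
Proof. exact: rmorph_sum. Qed.

Lemma phi_var n (wf : triple n -> assign n) t : (forall t, wf t = W t) ->
  phi wf (var t) = 'X_[monom (W t)].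
Proof.
move=> Hwf; rewrite /phi /var comp_mpolyXU -tnth_nth tnth_mktuple enum_rankK Hwf //.
Qed.

Lemma phi_prod n (wf : triple n -> assign n) ts : (forall t, wf t = W t) ->
  phi wf (prodw ts) = 'X_[monom (S ts)].
Proof.
move=> Hwf; elim: ts => [|t ts IH].
  by rewrite /prodw big_nil phi1 monom0 mpolyX0.
rewrite /prodw big_cons phiM -/(prodw ts) IH phi_var //.
by rewrite -mpolyXD -monom_add.
Qed.

Definition mts n (m : 'X_{1..nvars n}) : seq (triple n) :=
  flatten [seq nseq (m i) (enum_val i) | i <- index_enum 'I_(nvars n)].

Lemma prodw_nseq n k (a : triple n) : prodw (nseq k a) = var a ^+ k.
Proof.
elim: k => [|k IH]; first by rewrite /prodw big_nil expr0.
by rewrite /prodw /= big_cons -/(prodw _) IH exprS.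
Qed.

Lemma X_mts n (m : 'X_{1..nvars n}) : 'X_[m] = prodw (mts m).
Proof.
rewrite mpolyXE_id /prodw /mts big_flatten big_map.
apply: eq_bigr => i _; rewrite -/(prodw _) prodw_nseq /var enum_valK //.
Qed.

Definition img n (m : 'X_{1..nvars n}) := monom (S (mts m)).

Lemma phi_X n (wf : triple n -> assign n) m : (forall t, wf t = W t) ->
  phi wf 'X_[m] = 'X_[img m].
Proof. by move=> Hwf; rewrite X_mts phi_prod. Qed.

Definition rep n (e : 'X_{1..nslots n}) : 'X_{1..nvars n} :=
  epsilon (inhabits 0%MM) (fun m => img m = e).

Lemma repP n (m : 'X_{1..nvars n}) : img (rep (img m)) = img m.
Proof. by apply: (epsilon_spec (inhabits 0%MM) (fun m' => img m' = img m)); exists m. Qed.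

Lemma Jmono n (m : 'X_{1..nvars n}) : (3 <= n)%N -> J3n ('X_[m] - 'X_[rep (img m)]).
Proof.
move=> hn; rewrite !X_mts; apply: (key hn (erefl _)).
by apply: monom_inj; rewrite -!/(img _) repP.
Qed.

Lemma phi_expand n (wf : triple n -> assign n) p : (forall t, wf t = W t) ->
  phi wf p = \sum_(m <- msupp p) p@_m *: 'X_[img m].
Proof.
move=> Hwf; rewrite {1}(mpolyE p) phi_sum; apply: eq_bigr => m _.
by rewrite phiZ phi_X.
Qed.

Lemma ker_J n (wf : triple n -> assign n) p : (3 <= n)%N -> (forall t, wf t = W t) ->
  phi wf p = 0 -> J3n p.
Proof.
move=> hn Hwf Hp.
pose N := \sum_(m <- msupp p) p@_m *: 'X_[rep (img m)].
have J1 : J3n (p - N).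
  rewrite {1}(mpolyE p) /N -sumrB; apply: Jsum => m.
  rewrite -scalerBr; apply: JZ; exact: Jmono.
have N0 : N = 0.
  apply/mpolyP => mu; rewrite mcoeff0 /N raddf_sum /=.
  under eq_bigr do rewrite mcoeffZ mcoeffX.
  have := congr1 (mcoeff (img mu)) Hp; rewrite mcoeff0 phi_expand // raddf_sum /=.
  under eq_bigr do rewrite mcoeffZ mcoeffX.
  move=> H0.
  have [Er|Nr] := eqVneq (rep (img mu)) mu.
    apply: (etrans _ H0); apply: eq_bigr => m _; congr (_ * _%:R).
    have [E|E] := eqVneq (rep (img m)) mu.
      by rewrite -E repP eqxx.
    have [F|F] := eqVneq (img m) (img mu) => //.
    by move: E; rewrite F Er eqxx.
  apply: big1 => m _; have [E|E] := eqVneq (rep (img m)) mu; last by rewrite mulr0.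
  by move: Nr; rewrite -E repP eqxx.
by move: J1; rewrite N0 subr0.
Qed.

Lemma J_ker n (wf : triple n -> assign n) p : (3 <= n)%N -> (forall t, wf t = W t) ->
  J3n p -> phi wf p = 0.
Proof.
move=> hn Hwf [s [Hs ->]].
rewrite phi_sum; apply: big1_seq => q /andP [_ hq].
rewrite phiM.
have [t [u [v [x [[v1 v2 v3] [[x1 x2 x3] ->]]]]]] := Hs q hq.
have Ev : v = tmin t u by apply: tri_eq; rewrite ?tmin1 ?tmin2 ?tmin3.
have Ex : x = tmax t u by apply: tri_eq; rewrite ?tmax1 ?tmax2 ?tmax3.
rewrite phiB !phiM !phi_var //.
by rewrite -!mpolyXD -!monom_add Ev Ex hibi // subrr mulr0.
Qed.

End Part8.

Theorem mainTheorem6 (n : nat) (hn : (3 <= n)%N) :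
  (forall t : triple n,
     exists w : assign n,
       [/\ min_gen w, supp_span w t &
           forall w', min_gen w' -> supp_span w' t -> w' = w]) /\
  (forall w : assign n, min_gen w -> exists t : triple n, supp_span w t) /\
  (forall wf : triple n -> assign n,
     (forall t, min_gen (wf t) /\ supp_span (wf t) t) ->
     forall p : {mpoly algC[nvars n]}, kerI wf p <-> J3n p).
Proof.
have uniq : forall (t : triple n) (w' : assign n), min_gen w' -> supp_span w' t -> w' = W t.
  move=> t w' Mw Sw; have [s Es] := min_gen_W hn Mw.
  by subst w'; rewrite (supp_W_inj hn Sw).
split; [|split].
- move=> t; exists (W t); split; [exact: W_min_gen|exact: supp_W|].
  exact: uniq.
- move=> w Mw; have [s ->] := min_gen_W hn Mw; exists s; exact: supp_W.
- move=> wf Hwf p.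
  have Hw : forall t, wf t = W t by move=> t; have [M S] := Hwf t; exact: uniq.
  split; [exact: ker_J|exact: J_ker].
Qed.
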